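(* Let $G=(V,E)$ be an undirected simple graph, let $k\ge 2$ be an integer and $v\in V$. Let $m_v$ be the number of edges of the ego-network $G_{N(v)}$. Then $$score(v)\le \min\Big\{\Big\lfloor \frac{d(v)}{k}\Big\rfloor,\ \Big\lfloor\frac{2m_v}{k(k-1)}\Big\rfloor\Big\}.$$
   Context: $N(v)$ is the neighbor set of $v$, $d(v)=|N(v)|$, and $G_{N(v)}$ is the subgraph of $G$ induced by $N(v)$. For an integer $k\ge 2$, the $k$-truss of a graph $H$ is the subgraph formed by the largest edge set $F\subseteq E(H)$ such that every edge of $F$ lies in at least $k-2$ triangles all of whose edges are in $F$ (its vertices are those incident to edges of $F$). $score(v)$ is the number of connected components of the $k$-truss of $G_{N(v)}$. *)

(* Defs.v *)
From mathcomp Require Import all_boot.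
Set Implicit Arguments. Unset Strict Implicit. Unset Printing Implicit Defensive.

(* A finite undirected simple graph is a symmetric irreflexive relation
   [e : rel T] on a finite vertex type [T]. An edge is represented as the
   2-element vertex set [set a; b]. *)

Section Truss.
Variables (T : finType) (e : rel T).

Definition nbhd (v : T) : {set T} := [set u | e v u].

Definition deg (v : T) : nat := #|nbhd v|.

Definition induced_edges (S : {set T}) : {set {set T}} :=
  [set [set a; b] | a in S, b in S & e a b].

Definition ego_edges (v : T) : {set {set T}} := induced_edges (nbhd v).

Definition ego_size (v : T) : nat := #|ego_edges v|.

Definition tri_count (F : {set {set T}}) (a b : T) : nat :=
  #|[set x : T | ([set a; x] \in F) && ([set b; x] \in F)]|.

Definition truss_valid (k : nat) (EH F : {set {set T}}) : bool :=
  (F \subset EH) &&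
  [forall a : T, forall b : T, ([set a; b] \in F) && (a != b) ==> (k - 2 <= tri_count F a b)].

(* the edge set of the k-truss: the largest valid edge set
   (the union of all valid sets; valid sets are closed under union) *)
Definition ktruss_edges (k : nat) (EH : {set {set T}}) : {set {set T}} :=
  \bigcup_(F in [set F : {set {set T}} | truss_valid k EH F]) F.

Definition eadj (F : {set {set T}}) : rel T := fun a b => (a != b) && ([set a; b] \in F).
Definition evertices (F : {set {set T}}) : {set T} :=
  [set a | [exists b, eadj F a b]].

Definition n_components (F : {set {set T}}) : nat :=
  #|[set [set y in evertices F | connect (eadj F) x y] | x in evertices F]|.

Definition score (k : nat) (v : T) : nat :=
  n_components (ktruss_edges k (ego_edges v)).

End Truss.

(* Main.v *)
Require Import Defs.
From mathcomp Require Import all_boot.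
Set Implicit Arguments.
From mathcomp Require Import zify.

Section Proof.
Variables (T : finType) (e : rel T) (e_sym : symmetric e) (e_irr : irreflexive e).
Variables (k : nat) (v : T).

Let EH := ego_edges e v.
Let U := ktruss_edges k EH.

Lemma ego_two E : E \in EH -> exists c d, [/\ E = [set c; d], c \in nbhd e v, d \in nbhd e v & c != d].
Proof.
case/imset2P => c d cS; rewrite inE => /andP[dS ecd] ->.
exists c, d; split => //; apply: contraTneq ecd => ->; by rewrite e_irr.
Qed.

Lemma U_sub : U \subset EH.
Proof. by apply/bigcupsP => F; rewrite inE => /andP[]. Qed.

Lemma U_neq a b : [set a; b] \in U -> a != b.
Proof.
move=> /(subsetP U_sub) /ego_two [c [d [E _ _ cd]]].
have := cards2 a b; rewrite E cards2 cd; by case: (a != b).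
Qed.

Lemma U_tri a b : a != b -> [set a; b] \in U -> k - 2 <= tri_count U a b.
Proof.
move=> ab /bigcupP [F Fin abF].
move: (Fin); rewrite inE => /andP[_ /forallP H].
have := H a => /forallP /(_ b); rewrite abF ab /= => le.
apply: leq_trans le _; apply: subset_leq_card; apply/subsetP => x.
by rewrite !inE => /andP[h1 h2]; rewrite !(subsetP (bigcup_sup F Fin)).
Qed.

Definition Nb a := [set b | eadj U a b].

Lemma deg_ge a : a \in evertices U -> k - 1 <= #|Nb a|.
Proof.
rewrite inE => /existsP [b /andP [ab abU]].
have := @U_tri a b ab abU; rewrite /tri_count.
set X := [set x | _] => hX.
have sub : b |: X \subset Nb a.
  apply/subsetP => y; rewrite !inE => /orP [/eqP -> | /andP [h1 h2]].
    by rewrite /eadj ab abU.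
  by rewrite /eadj (@U_neq _ _ h1) h1.
have bX : b \notin X.
  by apply/negP; rewrite inE => /andP [_ h]; have := @U_neq _ _ h; rewrite eqxx.
have := subset_leq_card sub; rewrite cardsU1 bX /=; lia.
Qed.

Lemma W_sub : evertices U \subset nbhd e v.
Proof.
apply/subsetP => a; rewrite inE => /existsP [b /andP [_ abU]].
have /ego_two [c [d [E cS dS _]]] := subsetP U_sub _ abU.
have : a \in [set a; b] by rewrite set21.
by move: cS dS; rewrite E !inE => cS dS /orP [] /eqP ->.
Qed.

Lemma eadj_sym : symmetric (eadj U).
Proof. by move=> a b; rewrite /eadj setUC eq_sym. Qed.

Lemma comp_ge a : a \in evertices U ->
  k <= #|[set y in evertices U | connect (eadj U) a y]|.
Proof.
move=> aW; have := deg_ge aW => hd.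
have sub : a |: Nb a \subset [set y in evertices U | connect (eadj U) a y].
  apply/subsetP => y; rewrite !inE => /orP [/eqP -> | h].
    by move: (aW); rewrite inE => ->; rewrite connect0.
  rewrite connect1 // andbT; apply/existsP; exists a; by rewrite eadj_sym.
have aN : a \notin Nb a by rewrite inE /eadj eqxx.
have := subset_leq_card sub; rewrite cardsU1 aN /=; lia.
Qed.

Lemma score_W : score e k v * k <= #|evertices U|.
Proof.
rewrite /score /n_components -/EH -/U.
set W := evertices U.
have := @equivalence_partitionP _ (connect (eadj U)) W.
rewrite /equivalence_partition => P.
rewrite (card_partition (P _)); last first.
  move=> x y z _ _ _; split; first exact: connect0.
  move=> cxy; have cyx : connect (eadj U) y x.
    by rewrite (sym_connect_sym eadj_sym).
  by apply/idP/idP => h; [exact: connect_trans cyx h | exact: connect_trans cxy h].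
rewrite -sum_nat_const; apply: leq_sum => A /imsetP [x xW ->].
exact: comp_ge.
Qed.

Definition Pairs := [set p : T * T | eadj U p.1 p.2].

Lemma pairs_sum : #|Pairs| = \sum_a #|Nb a|.
Proof.
rewrite -sum1_card.
have -> : \sum_a #|Nb a| = \sum_a \sum_(b | eadj U a b) 1.
  by apply: eq_bigr => a _; rewrite -sum1_card; apply: eq_bigl => b; rewrite inE.
rewrite pair_big_dep /=; apply: eq_bigl => p; by rewrite inE.
Qed.

Lemma pairs_lower : (k - 1) * #|evertices U| <= #|Pairs|.
Proof.
rewrite pairs_sum mulnC -sum_nat_const.
rewrite [X in _ <= X](bigID (fun a => a \in evertices U)) /=.
apply: leq_trans (leq_addr _ _); apply: leq_sum => a; exact: deg_ge.
Qed.

Lemma set2_eq (a b c d : T) : a != b -> [set a; b] = [set c; d] -> (a = c /\ b = d) \/ (a = d /\ b = c).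
Proof.
move=> ab E.
have : a \in [set c; d] by rewrite -E set21.
have : b \in [set c; d] by rewrite -E set22.
rewrite !inE => /orP [] /eqP hb /orP [] /eqP ha; subst;
  by [rewrite eqxx in ab | left | right].
Qed.

Lemma half_le (lt : T -> T -> bool) (asym : forall a b, lt a b -> ~~ lt b a) :
  #|[set p in Pairs | lt p.1 p.2]| <= #|U|.
Proof.
rewrite -(@card_in_imset _ _ (fun p : T * T => [set p.1; p.2])).
  apply: subset_leq_card; apply/subsetP => E /imsetP [p]; rewrite !inE.
  by case/andP => /andP [_ h] _ ->.
move=> [a b] [c d]; rewrite !inE /= => /andP [/andP [ab _] l1] /andP [_ l2] E.
case: (set2_eq ab E) => [[-> ->] // | [h1 h2]].
by subst; have := asym _ _ l1; rewrite l2.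
Qed.

Lemma pairs_upper : #|Pairs| <= 2 * #|U|.
Proof.
pose r (a : T) : nat := enum_rank a.
have sub : Pairs \subset [set p in Pairs | r p.1 < r p.2] :|: [set p in Pairs | r p.2 < r p.1].
  apply/subsetP => p pP; rewrite !inE; move: (pP); rewrite inE => ->; rewrite /=.
  move: pP; rewrite inE /eadj => /andP [ne _].
  have : r p.1 != r p.2.
    apply: contra ne => /eqP h; apply/eqP; apply: enum_rank_inj; exact: val_inj.
  by rewrite neq_ltn.
apply: leq_trans (subset_leq_card sub) _.
apply: leq_trans (leq_card_setU _ _) _.
have H1 := @half_le (fun a b => r a < r b).
have H2 := @half_le (fun a b => r b < r a).
rewrite mul2n -addnn leq_add //; [apply: H1 | apply: H2] => a b /=; rewrite -leqNgt; exact: ltnW.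
Qed.

End Proof.

Theorem lemma2 (T : finType) (e : rel T) (e_sym : symmetric e) (e_irr : irreflexive e)
  (k : nat) (hk : 2 <= k) (v : T) :
  score e k v <= minn (deg e v %/ k) ((2 * ego_size e v) %/ (k * (k - 1))).
Proof.
have h1 := score_W T e_irr k v.
have h2 := subset_leq_card (W_sub T e_irr k v).
have h3 := pairs_lower T e_irr k v.
have h4 := pairs_upper T e k v.
have h5 : #|ktruss_edges k (ego_edges e v)| <= ego_size e v.
  exact: subset_leq_card (U_sub T e k v).
rewrite leq_min; apply/andP; split.
  by rewrite leq_divRL ?(leq_trans _ hk) //; apply: leq_trans h1 h2.
rewrite leq_divRL; last by rewrite muln_gt0; apply/andP; split; lia.
rewrite mulnA; apply: leq_trans (leq_mul h1 (leqnn (k-1))) _.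
rewrite mulnC; apply: leq_trans h3 _; apply: leq_trans h4 _.
by rewrite leq_mul2l h5 orbT.
Qed.
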